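(* Consider the semi-discrete flux globalization based low-dissipation path-conservative central-upwind (LD PCCU) scheme described in the context, and assume that all quantities appearing in it are well defined (all densities $\rho^\pm_{j+1/2}>0$, all $\Gamma^\pm_{j+1/2}>0$, the square roots defining $c^\pm_{j+1/2}$ are real, $a^+_{j+1/2}-a^-_{j+1/2}>0$, and $\rho^*_{j+1/2}\neq0$, $\Gamma^*_{j+1/2}\neq0$ for all relevant $j$). 1. If at some time $t$ the cell averages satisfy $\overline\Gamma_j\equiv\widehat\Gamma$ and $\overline\Pi_j\equiv\widehat\Pi$ for all $j$ (including ghost cells), where $\widehat\Gamma,\widehat\Pi$ are constants, then $$\frac{d}{dt}\overline\Gamma_j=\frac{d}{dt}\overline\Pi_j=0\quad\text{for all } j=1,\dots,N,$$ i.e., the fourth and fifth components of the right-hand side of the semi-discrete scheme vanish. 2. Suppose that at time level $t^n$ the cell-centered velocities and pressures satisfy $u^n_j\equiv\widehat u$ and $p^n_j\equiv\widehat p$ for all $j$ (including ghost cells), with constants $\widehat u,\widehat p$, and let the cell averages at $t^{n+1}=t^n+\Delta t$ be computed by one forward Euler step $$\overline{\mathbf U}^{\,n+1}_j=\overline{\mathbf U}^{\,n}_j-\frac{\Delta t}{\Delta x}\Big(\boldsymbol{\mathcal K}_{j+1/2}-\boldsymbol{\mathcal K}_{j-1/2}\Big),\qquad j=1,\dots,N,$$ with the numerical fluxes evaluated from the data at $t^n$. Assume $\overline\rho^{\,n+1}_j\neq0$ and $\overline\Gamma^{\,n+1}_j\neq0$. Then $$u^{n+1}_j:=\frac{(\overline{\rho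 u})^{n+1}_j}{\overline\rho^{\,n+1}_j}=\widehat u,\qquad p^{n+1}_j:=\frac{1}{\overline\Gamma^{\,n+1}_j}\Big[\overline E^{\,n+1}_j-\frac{\big((\overline{\rho u})^{n+1}_j\big)^2}{2\overline\rho^{\,n+1}_j}-\overline\Pi^{\,n+1}_j\Big]=\widehat p\qquad\text{for all } j=1,\dots,N.$$
   Context: Model: the 1-D $\gamma$-based multifluid system $\rho_t+(\rho u)_x=0$, $(\rho u)_t+(\rho u^2+p)_x=0$, $E_t+[u(E+p)]_x=0$, $\Gamma_t+(u\Gamma)_x=\Gamma u_x$, $\Pi_t+(u\Pi)_x=\Pi u_x$, where $\Gamma=1/(\gamma-1)$, $\Pi=\gamma\pi_\infty/(\gamma-1)$ and the EOS is $p=(E-\tfrac12\rho u^2-\Pi)/\Gamma$. Write $\mathbf U=(\rho,\rho u,E,\Gamma,\Pi)^\top$, $\mathbf F(\mathbf U)=(\rho u,\rho u^2+p,u(E+p),u\Gamma,u\Pi)^\top$. Let ${\rm minmod}(c_1,c_2)$ equal $\min(c_1,c_2)$ if both are positive, $\max(c_1,c_2)$ if both are negative, and $0$ otherwise. Mesh and data: uniform cells $C_j=[x_{j-1/2},x_{j+1/2}]$ of width $\Delta x$, $j=1,\dots,N$, together with finitely many ghost cells on each side supplying the data needed below. Cell averages $\overline{\mathbf U}_j=(\overline\rho_j,(\overline{\rho u})_j,\overline E_j,\overline\Gamma_j,\overline\Pi_j)^\top$ are given; set $u_j=(\overline{\rho u})_j/\overline\rho_j$, $p_j=\big[\overline E_j-((\overline{\rho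 u})_j)^2/(2\overline\rho_j)-\overline\Pi_j\big]/\overline\Gamma_j$, and $\mathbf V_j=(\overline\rho_j,u_j,p_j,\overline\Gamma_j,\overline\Pi_j)^\top$. Reconstruction: $\mathbf V^-_{j+1/2}=\mathbf V_j+\tfrac{\Delta x}{2}(\mathbf V_x)_j$, $\mathbf V^+_{j+1/2}=\mathbf V_{j+1}-\tfrac{\Delta x}{2}(\mathbf V_x)_{j+1}$, where the slopes $(\mathbf V_x)_j$ are computed componentwise by a limiter (e.g. generalized minmod or SBM) with the property that the slope of a component vanishes whenever that component takes the same value in all cells of the stencil. Write $\mathbf V^\pm_{j+1/2}=(\rho^\pm,u^\pm,p^\pm,\Gamma^\pm,\Pi^\pm)_{j+1/2}$, and define $E^\pm_{j+1/2}=\Gamma^\pm_{j+1/2}p^\pm_{j+1/2}+\tfrac12\rho^\pm_{j+1/2}(u^\pm_{j+1/2})^2+\Pi^\pm_{j+1/2}$, $\mathbf U^\pm_{j+1/2}=(\rho^\pm,\rho^\pm u^\pm,E^\pm,\Gamma^\pm,\Pi^\pm)^\top_{j+1/2}$, $\mathbf F^\pm_{j+1/2}=\mathbf F(\mathbf U^\pm_{j+1/2})$. Global fluxes: let $\mathbf B_j=\big(0,0,0,\tfrac{\Gamma^-_{j+1/2}+\Gamma^+_{j-1/2}}{2}(u^-_{j+1/2}-u^+_{j-1/2}),\tfrac{\Pi^-_{j+1/2}+\Pi^+_{j-1/2}}{2}(u^-_{j+1/2}-u^+_{j-1/2})\big)^\top$ and $\mathbf B_{\Psi,j+1/2}=\big(0,0,0,\tfrac{\Gamma^+_{j+1/2}+\Gamma^-_{j+1/2}}{2}(u^+_{j+1/2}-u^-_{j+1/2}),\tfrac{\Pi^+_{j+1/2}+\Pi^-_{j+1/2}}{2}(u^+_{j+1/2}-u^-_{j+1/2})\big)^\top$.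 Set $\mathbf R^-_{1/2}=\mathbf 0$, $\mathbf R^+_{1/2}=\mathbf B_{\Psi,1/2}$, and recursively $\mathbf R^-_{j+1/2}=\mathbf R^+_{j-1/2}+\mathbf B_j$, $\mathbf R^+_{j+1/2}=\mathbf R^-_{j+1/2}+\mathbf B_{\Psi,j+1/2}$ for $j=1,\dots,N$; then $\mathbf K^\pm_{j+1/2}=\mathbf F^\pm_{j+1/2}-\mathbf R^\pm_{j+1/2}$. Local speeds: $c=\sqrt{[(1+\Gamma)p+\Pi]/(\Gamma\rho)}$ evaluated at the $\pm$ point values, $a^+_{j+1/2}=\max\{u^-_{j+1/2}+c^-_{j+1/2},u^+_{j+1/2}+c^+_{j+1/2},0\}$, $a^-_{j+1/2}=\min\{u^-_{j+1/2}-c^-_{j+1/2},u^+_{j+1/2}-c^+_{j+1/2},0\}$. Anti-diffusion: $\mathbf U^*_{j+1/2}=\dfrac{a^+_{j+1/2}\mathbf U^+_{j+1/2}-a^-_{j+1/2}\mathbf U^-_{j+1/2}-(\mathbf K^+_{j+1/2}-\mathbf K^-_{j+1/2})}{a^+_{j+1/2}-a^-_{j+1/2}}$ with components $(\rho^*,(\rho u)^*,E^*,\Gamma^*,\Pi^* )_{j+1/2}$, $u^*_{j+1/2}=(\rho u)^*_{j+1/2}/\rho^*_{j+1/2}$; for $w\in\{\rho,\Gamma,\Pi\}$, $q^w_{j+1/2}={\rm minmod}\big(-a^-_{j+1/2}(w^*_{j+1/2}-w^-_{j+1/2}),\,a^+_{j+1/2}(w^+_{j+1/2}-w^*_{j+1/2})\big)$;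 and $\mathbf q_{j+1/2}=q^\rho_{j+1/2}\big(1,u^*,\tfrac12(u^* )^2,0,0\big)^\top_{j+1/2}+q^\Gamma_{j+1/2}\big(0,0,\tfrac{1}{\Gamma^*}\big[E^*-\tfrac{((\rho u)^* )^2}{2\rho^*}-\Pi^*\big],1,0\big)^\top_{j+1/2}+q^\Pi_{j+1/2}(0,0,1,0,1)^\top$. Numerical flux: $\boldsymbol{\mathcal K}_{j+1/2}=\dfrac{a^+_{j+1/2}\mathbf K^-_{j+1/2}-a^-_{j+1/2}\mathbf K^+_{j+1/2}}{a^+_{j+1/2}-a^-_{j+1/2}}+\dfrac{a^+_{j+1/2}a^-_{j+1/2}}{a^+_{j+1/2}-a^-_{j+1/2}}(\mathbf U^+_{j+1/2}-\mathbf U^-_{j+1/2})+\mathbf q_{j+1/2}$. Semi-discrete LD PCCU scheme: $\dfrac{d}{dt}\overline{\mathbf U}_j=-\dfrac{\boldsymbol{\mathcal K}_{j+1/2}-\boldsymbol{\mathcal K}_{j-1/2}}{\Delta x}$, $j=1,\dots,N$. *)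

(* Defs.v *)
From HB Require Import structures.
From mathcomp Require Import all_boot all_order all_algebra.
Set Implicit Arguments. Unset Strict Implicit. Unset Printing Implicit Defensive.
Import Order.TTheory GRing.Theory Num.Theory.
Local Open Scope ring_scope.

(* Five-component state vectors  (rho, rho u, E, Gamma, Pi). *)
Record vec5 (R : Type) := V5 { c1 : R; c2 : R; c3 : R; c4 : R; c5 : R }.

Section Ops.
Variable R : rcfType.
Definition vadd (a b : vec5 R) : vec5 R :=
  V5 (c1 a + c1 b) (c2 a + c2 b) (c3 a + c3 b) (c4 a + c4 b) (c5 a + c5 b).
Definition vscale (k : R) (a : vec5 R) : vec5 R :=
  V5 (k * c1 a) (k * c2 a) (k * c3 a) (k * c4 a) (k * c5 a).
Definition vsub (a b : vec5 R) : vec5 R := vadd a (vscale (-1) b).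
Definition vzero : vec5 R := V5 0 0 0 0 0.

Definition minmod (x y : R) : R :=
  if (0 < x) && (0 < y) then Num.min x y
  else if (x < 0) && (y < 0) then Num.max x y else 0.

Definition vel (U : vec5 R) : R := c2 U / c1 U.
Definition pres (U : vec5 R) : R :=
  (c3 U - (c2 U) ^+ 2 / (2 * c1 U) - c5 U) / c4 U.

Definition flux (U : vec5 R) : vec5 R :=
  let u := vel U in let p := pres U in
  V5 (c2 U) (c2 U * u + p) (u * (c3 U + p)) (u * c4 U) (u * c5 U).

Record pv := PV { prho : R; pu : R; pp : R; pG : R; pP : R }.
Definition U_of_pv (v : pv) : vec5 R :=
  V5 (prho v) (prho v * pu v)
     (pG v * pp v + 2^-1 * prho v * (pu v) ^+ 2 + pP v) (pG v) (pP v).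
Definition sound (v : pv) : R :=
  Num.sqrt (((1 + pG v) * pp v + pP v) / (pG v * prho v)).
Definition sound_arg (v : pv) : R :=
  ((1 + pG v) * pp v + pP v) / (pG v * prho v).
End Ops.

(* A limiter computes the slope of one component (given as a function of the
   cell index) at cell j.  Admissibility: it vanishes whenever the component
   is constant on the stencil {j-s, ..., j+s}. *)
Definition limiter_ok (R : rcfType) (s : nat) (lim : (int -> R) -> int -> R) :=
  forall (w : int -> R) (j : int),
    (forall i : int, (j - s%:Z <= i <= j + s%:Z) -> w i = w j) -> lim w j = 0.

Section Scheme.
Variables (R : rcfType) (dx : R) (lim : (int -> R) -> int -> R)
          (Ub : int -> vec5 R).
(* Ub j = cell average of cell C_j; cells 1..N are interior, all other
   indices are ghost cells.  Interface index j stands for x_{j+1/2}. *)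

Definition cellV (j : int) : pv R :=
  PV (c1 (Ub j)) (vel (Ub j)) (pres (Ub j)) (c4 (Ub j)) (c5 (Ub j)).

Definition comp_rho j := prho (cellV j).
Definition comp_u j := pu (cellV j).
Definition comp_p j := pp (cellV j).
Definition comp_G j := pG (cellV j).
Definition comp_P j := pP (cellV j).

Definition recm (w : int -> R) (j : int) : R := w j + dx / 2 * lim w j.
Definition recp (w : int -> R) (j : int) : R := w (j + 1) - dx / 2 * lim w (j + 1).

Definition Vm (j : int) : pv R :=
  PV (recm comp_rho j) (recm comp_u j) (recm comp_p j) (recm comp_G j) (recm comp_P j).
Definition Vp (j : int) : pv R :=
  PV (recp comp_rho j) (recp comp_u j) (recp comp_p j) (recp comp_G j) (recp comp_P j).

Definition Um j := U_of_pv (Vm j).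
Definition Up j := U_of_pv (Vp j).
Definition Fm j := flux (Um j).
Definition Fp j := flux (Up j).

Definition Bcell (j : int) : vec5 R :=
  let du := pu (Vm j) - pu (Vp (j - 1)) in
  V5 0 0 0 ((pG (Vm j) + pG (Vp (j - 1))) / 2 * du)
           ((pP (Vm j) + pP (Vp (j - 1))) / 2 * du).
Definition BPsi (j : int) : vec5 R :=
  let du := pu (Vp j) - pu (Vm j) in
  V5 0 0 0 ((pG (Vp j) + pG (Vm j)) / 2 * du)
           ((pP (Vp j) + pP (Vm j)) / 2 * du).

(* (R^-_{n+1/2}, R^+_{n+1/2}) for n : nat, following the recursion
   R^-_{1/2} = 0, R^+_{1/2} = B_{Psi,1/2},
   R^-_{j+1/2} = R^+_{j-1/2} + B_j, R^+_{j+1/2} = R^-_{j+1/2} + B_{Psi,j+1/2}. *)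
Fixpoint RR (n : nat) : vec5 R * vec5 R :=
  match n with
  | 0 => (vzero R, BPsi 0)
  | n'.+1 => let rm := vadd (RR n').2 (Bcell (Posz n)) in
             (rm, vadd rm (BPsi (Posz n)))
  end.

(* Only interfaces j = 0..N (i.e. 1/2, ..., N+1/2) are used by the scheme;
   negative indices are never used and are given a dummy value. *)
Definition Rm (j : int) : vec5 R :=
  match j with Posz n => (RR n).1 | Negz _ => vzero R end.
Definition Rp (j : int) : vec5 R :=
  match j with Posz n => (RR n).2 | Negz _ => vzero R end.

Definition Km j := vsub (Fm j) (Rm j).
Definition Kp j := vsub (Fp j) (Rp j).

Definition cm j := sound (Vm j).
Definition cp j := sound (Vp j).
Definition aplus j :=
  Num.max (Num.max (pu (Vm j) + cm j) (pu (Vp j) + cp j)) 0.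
Definition aminus j :=
  Num.min (Num.min (pu (Vm j) - cm j) (pu (Vp j) - cp j)) 0.

Definition Ustar (j : int) : vec5 R :=
  vscale (aplus j - aminus j)^-1
    (vsub (vsub (vscale (aplus j) (Up j)) (vscale (aminus j) (Um j)))
          (vsub (Kp j) (Km j))).
Definition ustar j := c2 (Ustar j) / c1 (Ustar j).

Definition qw (sel : vec5 R -> R) (j : int) : R :=
  minmod (- aminus j * (sel (Ustar j) - sel (Um j)))
         (aplus j * (sel (Up j) - sel (Ustar j))).

Definition qvec (j : int) : vec5 R :=
  let S := Ustar j in
  vadd (vadd
    (vscale (qw (@c1 R) j) (V5 1 (ustar j) (2^-1 * ustar j ^+ 2) 0 0))
    (vscale (qw (@c4 R) j)
       (V5 0 0 ((c4 S)^-1 * (c3 S - (c2 S) ^+ 2 / (2 * c1 S) - c5 S)) 1 0)))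
    (vscale (qw (@c5 R) j) (V5 0 0 1 0 1)).

Definition Kflux (j : int) : vec5 R :=
  let d := aplus j - aminus j in
  vadd (vadd
    (vscale d^-1 (vsub (vscale (aplus j) (Km j)) (vscale (aminus j) (Kp j))))
    (vscale (aplus j * aminus j / d) (vsub (Up j) (Um j))))
    (qvec j).

Definition rhs (j : int) : vec5 R :=
  vscale (- dx^-1) (vsub (Kflux j) (Kflux (j - 1))).

Definition euler_step (dt : R) (j : int) : vec5 R :=
  vadd (Ub j) (vscale dt (rhs j)).

Definition well_defined (N : nat) : Prop :=
  forall j : int, 0 <= j <= N%:Z ->
    (0 < prho (Vm j) /\ 0 < prho (Vp j)) /\ (0 < pG (Vm j) /\ 0 < pG (Vp j)) /\
    (0 <= sound_arg (Vm j) /\ 0 <= sound_arg (Vp j)) /\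
    0 < aplus j - aminus j /\
    (c1 (Ustar j) != 0 /\ c4 (Ustar j) != 0).
End Scheme.

(* Main.v *)
Require Import Defs.
From HB Require Import structures.
From mathcomp Require Import all_boot all_order all_algebra.
From mathcomp Require Import ring lra.
Import Order.TTheory GRing.Theory Num.Theory.
Local Open Scope ring_scope.

Lemma intS1 (n:nat) : (Posz n.+1 - 1 = Posz n)%R.
Proof. by rewrite -addn1 PoszD addrK. Qed.

Lemma c1_vadd (R : rcfType) (a b : vec5 R) : c1 (vadd a b) = c1 a + c1 b. Proof. by []. Qed.
Lemma c1_vscale (R : rcfType) k (a : vec5 R) : c1 (vscale k a) = k * c1 a. Proof. by []. Qed.
Lemma c1_vsub (R : rcfType) (a b : vec5 R) : c1 (vsub a b) = c1 a - c1 b. Proof. by rewrite /vsub /= mulN1r. Qed.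
Lemma c2_vadd (R : rcfType) (a b : vec5 R) : c2 (vadd a b) = c2 a + c2 b. Proof. by []. Qed.
Lemma c2_vscale (R : rcfType) k (a : vec5 R) : c2 (vscale k a) = k * c2 a. Proof. by []. Qed.
Lemma c2_vsub (R : rcfType) (a b : vec5 R) : c2 (vsub a b) = c2 a - c2 b. Proof. by rewrite /vsub /= mulN1r. Qed.
Lemma c3_vadd (R : rcfType) (a b : vec5 R) : c3 (vadd a b) = c3 a + c3 b. Proof. by []. Qed.
Lemma c3_vscale (R : rcfType) k (a : vec5 R) : c3 (vscale k a) = k * c3 a. Proof. by []. Qed.
Lemma c3_vsub (R : rcfType) (a b : vec5 R) : c3 (vsub a b) = c3 a - c3 b. Proof. by rewrite /vsub /= mulN1r. Qed.
Lemma c4_vadd (R : rcfType) (a b : vec5 R) : c4 (vadd a b) = c4 a + c4 b. Proof. by []. Qed.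
Lemma c4_vscale (R : rcfType) k (a : vec5 R) : c4 (vscale k a) = k * c4 a. Proof. by []. Qed.
Lemma c4_vsub (R : rcfType) (a b : vec5 R) : c4 (vsub a b) = c4 a - c4 b. Proof. by rewrite /vsub /= mulN1r. Qed.
Lemma c5_vadd (R : rcfType) (a b : vec5 R) : c5 (vadd a b) = c5 a + c5 b. Proof. by []. Qed.
Lemma c5_vscale (R : rcfType) k (a : vec5 R) : c5 (vscale k a) = k * c5 a. Proof. by []. Qed.
Lemma c5_vsub (R : rcfType) (a b : vec5 R) : c5 (vsub a b) = c5 a - c5 b. Proof. by rewrite /vsub /= mulN1r. Qed.
Definition compE := (c1_vadd, c2_vadd, c3_vadd, c4_vadd, c5_vadd, c1_vscale, c2_vscale, c3_vscale, c4_vscale, c5_vscale, c1_vsub, c2_vsub, c3_vsub, c4_vsub, c5_vsub).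

Lemma lim0 (R : rcfType) (s : nat) (lim : (int -> R) -> int -> R) (w : int -> R) c j :
  limiter_ok s lim -> (forall i, w i = c) -> lim w j = 0.
Proof. by move=> H Hw; apply: H => i _; rewrite !Hw. Qed.

Lemma pGm (R : rcfType) (s : nat) dx lim (Ub : int -> vec5 R) G j :
  limiter_ok s lim -> (forall j, c4 (Ub j) = G) ->
  pG (Vm dx lim Ub j) = G /\ pG (Vp dx lim Ub j) = G.
Proof.
move=> Hl HG; rewrite /Vm /Vp /= /recm /recp.
rewrite !(@lim0 _ _ _ _ G _ Hl) //; first by rewrite /comp_G /= !HG mulr0 addr0 subr0.
Qed.

Lemma pPm (R : rcfType) (s : nat) dx lim (Ub : int -> vec5 R) P j :
  limiter_ok s lim -> (forall j, c5 (Ub j) = P) ->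
  pP (Vm dx lim Ub j) = P /\ pP (Vp dx lim Ub j) = P.
Proof.
move=> Hl HG; rewrite /Vm /Vp /= /recm /recp.
rewrite !(@lim0 _ _ _ _ P _ Hl) //; first by rewrite /comp_P /= !HG mulr0 addr0 subr0.
Qed.

Lemma RR4 (R : rcfType) (s : nat) dx lim (Ub : int -> vec5 R) G :
  limiter_ok s lim -> (forall j, c4 (Ub j) = G) -> forall n : nat,
  c4 (RR dx lim Ub n).1 = G * (pu (Vm dx lim Ub n) - pu (Vm dx lim Ub 0)) /\
  c4 (RR dx lim Ub n).2 = G * (pu (Vp dx lim Ub n) - pu (Vm dx lim Ub 0)).
Proof.
move=> Hl HG; have HH j : recm dx lim (comp_G Ub) j = G /\ recp dx lim (comp_G Ub) j = G := @pGm R s dx lim Ub G j Hl HG.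
elim=> [|n IH] /=.
  rewrite (HH 0).1 (HH 0).2; split; first by rewrite subrr mulr0.
  by field.
case: IH => IH1 IH2.
rewrite IH2 /= intS1 (HH n).2 (HH n.+1).1 (HH n.+1).2; split; by field.
Qed.

Lemma RR5 (R : rcfType) (s : nat) dx lim (Ub : int -> vec5 R) G :
  limiter_ok s lim -> (forall j, c5 (Ub j) = G) -> forall n : nat,
  c5 (RR dx lim Ub n).1 = G * (pu (Vm dx lim Ub n) - pu (Vm dx lim Ub 0)) /\
  c5 (RR dx lim Ub n).2 = G * (pu (Vp dx lim Ub n) - pu (Vm dx lim Ub 0)).
Proof.
move=> Hl HG; have HH j : recm dx lim (comp_P Ub) j = G /\ recp dx lim (comp_P Ub) j = G := @pPm R s dx lim Ub G j Hl HG.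
elim=> [|n IH] /=.
  rewrite (HH 0).1 (HH 0).2; split; first by rewrite subrr mulr0.
  by field.
case: IH => IH1 IH2.
rewrite IH2 /= intS1 (HH n).2 (HH n.+1).1 (HH n.+1).2; split; by field.
Qed.

Lemma K4 (R : rcfType) (s : nat) dx lim (Ub : int -> vec5 R) G (n : nat) :
  limiter_ok s lim -> (forall j, c4 (Ub j) = G) ->
  prho (Vm dx lim Ub n) != 0 -> prho (Vp dx lim Ub n) != 0 ->
  c4 (Km dx lim Ub n) = G * pu (Vm dx lim Ub 0) /\
  c4 (Kp dx lim Ub n) = G * pu (Vm dx lim Ub 0).
Proof.
move=> Hl HG.
have HH j : recm dx lim (comp_G Ub) j = G /\ recp dx lim (comp_G Ub) j = G := @pGm R s dx lim Ub G j Hl HG.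
have [H1 H2] := @RR4 R s dx lim Ub G Hl HG n.
rewrite /Km /Kp /Rm /Rp /vsub /vadd /vscale /= H1 H2 /= (HH n).1 (HH n).2 => h1 h2.
rewrite /vel /Um /Up /U_of_pv /=; split; by field.
Qed.

Lemma K5 (R : rcfType) (s : nat) dx lim (Ub : int -> vec5 R) G (n : nat) :
  limiter_ok s lim -> (forall j, c5 (Ub j) = G) ->
  prho (Vm dx lim Ub n) != 0 -> prho (Vp dx lim Ub n) != 0 ->
  c5 (Km dx lim Ub n) = G * pu (Vm dx lim Ub 0) /\
  c5 (Kp dx lim Ub n) = G * pu (Vm dx lim Ub 0).
Proof.
move=> Hl HG.
have HH j : recm dx lim (comp_P Ub) j = G /\ recp dx lim (comp_P Ub) j = G := @pPm R s dx lim Ub G j Hl HG.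
have [H1 H2] := @RR5 R s dx lim Ub G Hl HG n.
rewrite /Km /Kp /Rm /Rp /vsub /vadd /vscale /= H1 H2 /= (HH n).1 (HH n).2 => h1 h2.
rewrite /vel /Um /Up /U_of_pv /=; split; by field.
Qed.


Lemma F4 (R : rcfType) (s : nat) dx lim (Ub : int -> vec5 R) G (n : nat) :
  limiter_ok s lim -> (forall j, c4 (Ub j) = G) ->
  prho (Vm dx lim Ub n) != 0 -> prho (Vp dx lim Ub n) != 0 ->
  aplus dx lim Ub n - aminus dx lim Ub n != 0 ->
  c4 (Kflux dx lim Ub n) = G * pu (Vm dx lim Ub 0).
Proof.
move=> Hl HG h1 h2 hd.
have HH j : recm dx lim (comp_G Ub) j = G /\ recp dx lim (comp_G Ub) j = G := @pGm R s dx lim Ub G j Hl HG.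
have [H1 H2] := @K4 R s dx lim Ub G n Hl HG h1 h2.
have HU : c4 (Ustar dx lim Ub n) = G.
  rewrite /Ustar; move: (Km dx lim Ub n) (Kp dx lim Ub n) H1 H2 => km kp H1 H2.
  rewrite !compE H1 H2 /Up /Um /U_of_pv /= (HH n).1 (HH n).2.
  by field.
have Hq : qw dx lim Ub (@c4 R) n = 0.
  rewrite /qw HU /Up /Um /U_of_pv /= (HH n).1 (HH n).2 subrr !mulr0.
  by rewrite /minmod ltxx.
rewrite /Kflux /qvec; move: (Km dx lim Ub n) (Kp dx lim Ub n) H1 H2 => km kp H1 H2.
rewrite !compE Hq H1 H2 /= /Up /Um /U_of_pv /= (HH n).1 (HH n).2.
by field.
Qed.

Lemma F5 (R : rcfType) (s : nat) dx lim (Ub : int -> vec5 R) G (n : nat) :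
  limiter_ok s lim -> (forall j, c5 (Ub j) = G) ->
  prho (Vm dx lim Ub n) != 0 -> prho (Vp dx lim Ub n) != 0 ->
  aplus dx lim Ub n - aminus dx lim Ub n != 0 ->
  c5 (Kflux dx lim Ub n) = G * pu (Vm dx lim Ub 0).
Proof.
move=> Hl HG h1 h2 hd.
have HH j : recm dx lim (comp_P Ub) j = G /\ recp dx lim (comp_P Ub) j = G := @pPm R s dx lim Ub G j Hl HG.
have [H1 H2] := @K5 R s dx lim Ub G n Hl HG h1 h2.
have HU : c5 (Ustar dx lim Ub n) = G.
  rewrite /Ustar; move: (Km dx lim Ub n) (Kp dx lim Ub n) H1 H2 => km kp H1 H2.
  rewrite !compE H1 H2 /Up /Um /U_of_pv /= (HH n).1 (HH n).2.
  by field.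
have Hq : qw dx lim Ub (@c5 R) n = 0.
  rewrite /qw HU /Up /Um /U_of_pv /= (HH n).1 (HH n).2 subrr !mulr0.
  by rewrite /minmod ltxx.
rewrite /Kflux /qvec; move: (Km dx lim Ub n) (Kp dx lim Ub n) H1 H2 => km kp H1 H2.
rewrite !compE Hq H1 H2 /= /Up /Um /U_of_pv /= (HH n).1 (HH n).2.
by field.
Qed.

Lemma WDn (R : rcfType) (N : nat) dx lim (Ub : int -> vec5 R) (m : nat) :
  well_defined dx lim Ub N -> (m <= N)%N ->
  (prho (Vm dx lim Ub m) != 0) /\ (prho (Vp dx lim Ub m) != 0) /\
      (pG (Vm dx lim Ub m) != 0) /\ (pG (Vp dx lim Ub m) != 0) /\
      (aplus dx lim Ub m - aminus dx lim Ub m != 0) /\ (c1 (Ustar dx lim Ub m) != 0) /\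
      (c4 (Ustar dx lim Ub m) != 0).
Proof.
move=> W hm.
have := W m; rewrite lez_nat hm /= => /(_ isT).
move=> [[r1 r2] [[g1 g2] [_ [d [u1 u4]]]]].
by do !split => //; apply: lt0r_neq0.
Qed.

Lemma part1 (R : rcfType) (N : nat) (dx : R) (s : nat)
    (lim : (int -> R) -> int -> R) :
  limiter_ok s lim ->
  (forall (Ub : int -> vec5 R) (Ghat Phat : R),
     well_defined dx lim Ub N ->
     (forall j : int, c4 (Ub j) = Ghat /\ c5 (Ub j) = Phat) ->
     forall j : int, 1 <= j <= N%:Z ->
       c4 (rhs dx lim Ub j) = 0 /\ c5 (rhs dx lim Ub j) = 0).
Proof.
move=> Hl Ub G P W HGP j.
have HG j' : c4 (Ub j') = G by case: (HGP j').
have HP j' : c5 (Ub j') = P by case: (HGP j').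
case: j => [[|m]|k] //; rewrite ?lez_nat => /andP [_ hm].
have hm' : (m <= N)%N by apply: ltnW.
have [a1 [a2 [_ [_ [a5 _]]]]] := @WDn _ _ _ _ _ m W hm'.
have [b1 [b2 [_ [_ [b5 _]]]]] := @WDn _ _ _ _ _ m.+1 W hm.
rewrite /rhs c4_vscale c4_vsub c5_vscale c5_vsub intS1.
rewrite (@F4 _ _ _ _ _ _ m Hl HG a1 a2 a5) (@F4 _ _ _ _ _ _ m.+1 Hl HG b1 b2 b5) (@F5 _ _ _ _ _ _ m Hl HP a1 a2 a5) (@F5 _ _ _ _ _ _ m.+1 Hl HP b1 b2 b5).
by rewrite !subrr !mulr0.
Qed.

Ltac fld := field; repeat (apply/andP; split); try done.
Set Implicit Arguments.
Unset Strict Implicit.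
Definition goodk {R : rcfType} (u p l : R) (X : vec5 R) :=
  c2 X = u * c1 X + l * p /\
  c3 X = u ^+ 2 / 2 * c1 X + p * c4 X + c5 X + l * (u * p).

Lemma goodk_add (R : rcfType) (u p l m : R) (X Y : vec5 R) :
  goodk u p l X -> goodk u p m Y -> goodk u p (l + m) (vadd X Y).
Proof. move=> [h1 h2] [h3 h4]; rewrite /goodk /= h1 h2 h3 h4; split; ring. Qed.

Lemma goodk_scale (R : rcfType) (u p l k : R) (X : vec5 R) :
  goodk u p l X -> goodk u p (k * l) (vscale k X).
Proof. move=> [h1 h2]; rewrite /goodk /= h1 h2; split; ring. Qed.

Lemma goodk_sub (R : rcfType) (u p l m : R) (X Y : vec5 R) :
  goodk u p l X -> goodk u p m Y -> goodk u p (l - m) (vsub X Y).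
Proof.
move=> h1 h2; have := goodk_add h1 (goodk_scale (-1) h2).
by rewrite mulN1r.
Qed.

Lemma goodk_eq (R : rcfType) (u p l m : R) (X : vec5 R) :
  goodk u p l X -> l = m -> goodk u p m X.
Proof. by move=> h <-. Qed.

Lemma pum (R : rcfType) (s : nat) dx lim (Ub : int -> vec5 R) u j :
  limiter_ok s lim -> (forall j, vel (Ub j) = u) ->
  recm dx lim (comp_u Ub) j = u /\ recp dx lim (comp_u Ub) j = u.
Proof.
move=> Hl HG; rewrite /recm /recp.
rewrite !(@lim0 _ _ _ _ u _ Hl) //; first by rewrite /comp_u /= !HG mulr0 addr0 subr0.
Qed.

Lemma ppm (R : rcfType) (s : nat) dx lim (Ub : int -> vec5 R) p j :
  limiter_ok s lim -> (forall j, pres (Ub j) = p) ->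
  recm dx lim (comp_p Ub) j = p /\ recp dx lim (comp_p Ub) j = p.
Proof.
move=> Hl HG; rewrite /recm /recp.
rewrite !(@lim0 _ _ _ _ p _ Hl) //; first by rewrite /comp_p /= !HG mulr0 addr0 subr0.
Qed.

Lemma goodU (R : rcfType) (s : nat) dx lim (Ub : int -> vec5 R) u p j :
  limiter_ok s lim -> (forall j, vel (Ub j) = u) -> (forall j, pres (Ub j) = p) ->
  goodk u p 0 (Um dx lim Ub j) /\ goodk u p 0 (Up dx lim Ub j).
Proof.
move=> Hl Hu Hp.
have [u1 u2] := pum dx j Hl Hu; have [p1 p2] := ppm dx j Hl Hp.
rewrite /Um /Up /U_of_pv /goodk /= u1 u2 p1 p2.
split; split; field => //.
Qed.

Lemma goodF (R : rcfType) (s : nat) dx lim (Ub : int -> vec5 R) u p j :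
  limiter_ok s lim -> (forall j, vel (Ub j) = u) -> (forall j, pres (Ub j) = p) ->
  prho (Vm dx lim Ub j) != 0 -> prho (Vp dx lim Ub j) != 0 ->
  pG (Vm dx lim Ub j) != 0 -> pG (Vp dx lim Ub j) != 0 ->
  goodk u p 1 (Fm dx lim Ub j) /\ goodk u p 1 (Fp dx lim Ub j).
Proof.
move=> Hl Hu Hp.
have [u1 u2] := pum dx j Hl Hu; have [p1 p2] := ppm dx j Hl Hp.
rewrite /Fm /Fp /flux /vel /pres /Um /Up /U_of_pv /goodk /= u1 u2 p1 p2 => r1 r2 g1 g2.
by (repeat split); fld.
Qed.

Lemma goodB (R : rcfType) (s : nat) dx lim (Ub : int -> vec5 R) u p j :
  limiter_ok s lim -> (forall j, vel (Ub j) = u) ->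
  goodk u p 0 (Bcell dx lim Ub j) /\ goodk u p 0 (BPsi dx lim Ub j).
Proof.
move=> Hl Hu.
have [u1 u2] := pum dx j Hl Hu; have [u3 u4] := pum dx (j - 1) Hl Hu.
rewrite /Bcell /BPsi /goodk /= u1 u2 u4 !subrr !mulr0; by (repeat split); ring.
Qed.

Lemma goodRR (R : rcfType) (s : nat) dx lim (Ub : int -> vec5 R) u p :
  limiter_ok s lim -> (forall j, vel (Ub j) = u) -> forall n : nat,
  goodk u p 0 (RR dx lim Ub n).1 /\ goodk u p 0 (RR dx lim Ub n).2.
Proof.
move=> Hl Hu; elim=> [|n [IH1 IH2]].
  split; last exact: (@goodB R s dx lim Ub u p 0 Hl Hu).2.
  by rewrite /goodk /=; split; ring.
have [B1 B2] := @goodB R s dx lim Ub u p n.+1 Hl Hu.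
have h1 := goodk_eq (goodk_add IH2 B1) (addr0 0).
by split => //; apply: goodk_eq (goodk_add h1 B2) (addr0 0).
Qed.

Lemma goodK (R : rcfType) (s : nat) dx lim (Ub : int -> vec5 R) u p (n : nat) :
  limiter_ok s lim -> (forall j, vel (Ub j) = u) -> (forall j, pres (Ub j) = p) ->
  prho (Vm dx lim Ub n) != 0 -> prho (Vp dx lim Ub n) != 0 ->
  pG (Vm dx lim Ub n) != 0 -> pG (Vp dx lim Ub n) != 0 ->
  goodk u p 1 (Km dx lim Ub n) /\ goodk u p 1 (Kp dx lim Ub n).
Proof.
move=> Hl Hu Hp r1 r2 g1 g2.
have [F1 F2] := @goodF R s dx lim Ub u p n Hl Hu Hp r1 r2 g1 g2.
have [R1 R2] := @goodRR R s dx lim Ub u p Hl Hu n.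
split; [exact: goodk_eq (goodk_sub F1 R1) (subr0 1)
       |exact: goodk_eq (goodk_sub F2 R2) (subr0 1)].
Qed.

Lemma goodS (R : rcfType) (s : nat) dx lim (Ub : int -> vec5 R) u p (n : nat) :
  limiter_ok s lim -> (forall j, vel (Ub j) = u) -> (forall j, pres (Ub j) = p) ->
  prho (Vm dx lim Ub n) != 0 -> prho (Vp dx lim Ub n) != 0 ->
  pG (Vm dx lim Ub n) != 0 -> pG (Vp dx lim Ub n) != 0 ->
  goodk u p 0 (Ustar dx lim Ub n).
Proof.
move=> Hl Hu Hp r1 r2 g1 g2.
have [K1 K2] := @goodK R s dx lim Ub u p n Hl Hu Hp r1 r2 g1 g2.
have [U1 U2] := @goodU R s dx lim Ub u p n Hl Hu Hp.
apply: goodk_eq (goodk_scale _ (goodk_sub (goodk_sub (goodk_scale _ U2) (goodk_scale _ U1)) (goodk_sub K2 K1))) _.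
ring.
Qed.

Lemma goodQ (R : rcfType) (s : nat) dx lim (Ub : int -> vec5 R) u p (n : nat) :
  goodk u p 0 (Ustar dx lim Ub n) ->
  c1 (Ustar dx lim Ub n) != 0 -> c4 (Ustar dx lim Ub n) != 0 ->
  goodk u p 0 (qvec dx lim Ub n).
Proof.
move=> [S1 S2] h1 h4.
have Hus : ustar dx lim Ub n = u by rewrite /ustar S1; fld.
have Hb : (c4 (Ustar dx lim Ub n))^-1 * (c3 (Ustar dx lim Ub n) -
   (c2 (Ustar dx lim Ub n)) ^+ 2 / (2 * c1 (Ustar dx lim Ub n)) - c5 (Ustar dx lim Ub n)) = p.
  by rewrite S2 S1; fld.
have E1 : goodk u p 0 (V5 1 (ustar dx lim Ub n) (2^-1 * ustar dx lim Ub n ^+ 2) 0 0).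
  by rewrite /goodk /= Hus; split; ring.
have E2 : goodk u p 0 (V5 0 0 ((c4 (Ustar dx lim Ub n))^-1 * (c3 (Ustar dx lim Ub n) -
   (c2 (Ustar dx lim Ub n)) ^+ 2 / (2 * c1 (Ustar dx lim Ub n)) - c5 (Ustar dx lim Ub n))) 1 0).
  by rewrite /goodk /= Hb; split; ring.
have E3 : goodk u p 0 (V5 0 0 1 0 1) by rewrite /goodk /=; split; ring.
apply: goodk_eq (goodk_add (goodk_add (goodk_scale _ E1) (goodk_scale _ E2)) (goodk_scale _ E3)) _.
ring.
Qed.

Lemma goodKf (R : rcfType) (s : nat) dx lim (Ub : int -> vec5 R) u p (n : nat) :
  limiter_ok s lim -> (forall j, vel (Ub j) = u) -> (forall j, pres (Ub j) = p) ->
  prho (Vm dx lim Ub n) != 0 -> prho (Vp dx lim Ub n) != 0 ->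
  pG (Vm dx lim Ub n) != 0 -> pG (Vp dx lim Ub n) != 0 ->
  aplus dx lim Ub n - aminus dx lim Ub n != 0 ->
  c1 (Ustar dx lim Ub n) != 0 -> c4 (Ustar dx lim Ub n) != 0 ->
  goodk u p 1 (Kflux dx lim Ub n).
Proof.
move=> Hl Hu Hp r1 r2 g1 g2 hd s1 s4.
have [K1 K2] := @goodK R s dx lim Ub u p n Hl Hu Hp r1 r2 g1 g2.
have [U1 U2] := @goodU R s dx lim Ub u p n Hl Hu Hp.
have S := @goodS R s dx lim Ub u p n Hl Hu Hp r1 r2 g1 g2.
have Q := @goodQ R s dx lim Ub u p n S s1 s4.
apply: goodk_eq (goodk_add (goodk_add (goodk_scale _ (goodk_sub (goodk_scale _ K1) (goodk_scale _ K2))) (goodk_scale _ (goodk_sub U2 U1))) Q) _.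
by rewrite !mulr1 subrr mulr0 !addr0 mulVf.
Qed.

Lemma cellnz (R : rcfType) (N : nat) dx lim (Ub : int -> vec5 R) (m : nat) :
  well_defined dx lim Ub N -> (m < N)%N ->
  c1 (Ub m.+1) != 0 /\ c4 (Ub m.+1) != 0.
Proof.
move=> W hm.
have hm' : (m <= N)%N by apply: ltnW.
have := W m; rewrite lez_nat hm' /= => /(_ isT) [[_ A] [[_ B] _]].
have := W m.+1; rewrite lez_nat hm /= => /(_ isT) [[C _] [[D _] _]].
move: A B C D; rewrite /Vm /Vp /= /recm /recp.
have -> : (Posz m + 1)%R = Posz m.+1 by rewrite -addn1 PoszD.
rewrite /comp_rho /comp_G /= => A B C D.
split; apply: lt0r_neq0; lra.
Qed.

Lemma goodUb (R : rcfType) (Ub : int -> vec5 R) u p j :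
  (forall j, vel (Ub j) = u) -> (forall j, pres (Ub j) = p) ->
  c1 (Ub j) != 0 -> c4 (Ub j) != 0 -> goodk u p 0 (Ub j).
Proof.
move=> Hu Hp h1 h4.
rewrite /goodk -(Hu j) -(Hp j) /vel /pres; split; fld.
Qed.

Lemma part2 (R : rcfType) (N : nat) (dx : R) (s : nat)
    (lim : (int -> R) -> int -> R) :
  limiter_ok s lim ->
  (forall (Ub : int -> vec5 R) (uhat phat dt : R),
     well_defined dx lim Ub N ->
     (forall j : int, vel (Ub j) = uhat /\ pres (Ub j) = phat) ->
     forall j : int, 1 <= j <= N%:Z ->
       c1 (euler_step dx lim Ub dt j) != 0 ->
       c4 (euler_step dx lim Ub dt j) != 0 ->
       vel (euler_step dx lim Ub dt j) = uhat /\
       pres (euler_step dx lim Ub dt j) = phat).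
Proof.
move=> Hl Ub u p dt W Hup j.
have Hu j' : vel (Ub j') = u by case: (Hup j').
have Hp j' : pres (Ub j') = p by case: (Hup j').
case: j => [[|m]|k] //; rewrite ?lez_nat => /andP [_ hm].
have hm' : (m <= N)%N by apply: ltnW.
have [a1 [a2 [a3 [a4 [a5 [a6 a7]]]]]] := @WDn _ _ _ _ _ m W hm'.
have [b1 [b2 [b3 [b4 [b5 [b6 b7]]]]]] := @WDn _ _ _ _ _ m.+1 W hm.
have KA := @goodKf R s dx lim Ub u p m Hl Hu Hp a1 a2 a3 a4 a5 a6 a7.
have KB := @goodKf R s dx lim Ub u p m.+1 Hl Hu Hp b1 b2 b3 b4 b5 b6 b7.
have [c1n c4n] := @cellnz R N dx lim Ub m W hm.
have UB := @goodUb R Ub u p m.+1 Hu Hp c1n c4n.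
have E : goodk u p 0 (euler_step dx lim Ub dt m.+1).
  rewrite /euler_step /rhs intS1.
  apply: goodk_eq (goodk_add UB (goodk_scale _ (goodk_scale _ (goodk_sub KB KA)))) _.
  by rewrite subrr !mulr0 addr0.
move: E => [E1 E2] e1 e4.
rewrite /vel /pres E2 E1; split; fld.
Qed.

Unset Implicit Arguments.
Set Strict Implicit.

Theorem theorem1 (R : rcfType) (N : nat) (dx : R) (s : nat)
    (lim : (int -> R) -> int -> R) :
  0 < dx -> limiter_ok s lim ->
  (* Part 1: constant Gamma and Pi are preserved by the semi-discrete scheme *)
  (forall (Ub : int -> vec5 R) (Ghat Phat : R),
     well_defined dx lim Ub N ->
     (forall j : int, c4 (Ub j) = Ghat /\ c5 (Ub j) = Phat) ->
     forall j : int, 1 <= j <= N%:Z ->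
       c4 (rhs dx lim Ub j) = 0 /\ c5 (rhs dx lim Ub j) = 0) /\
  (* Part 2: constant velocity and pressure are preserved by a forward Euler step *)
  (forall (Ub : int -> vec5 R) (uhat phat dt : R),
     well_defined dx lim Ub N ->
     (forall j : int, vel (Ub j) = uhat /\ pres (Ub j) = phat) ->
     forall j : int, 1 <= j <= N%:Z ->
       c1 (euler_step dx lim Ub dt j) != 0 ->
       c4 (euler_step dx lim Ub dt j) != 0 ->
       vel (euler_step dx lim Ub dt j) = uhat /\
       pres (euler_step dx lim Ub dt j) = phat).
Proof.
move=> _ Hl; split; [exact: (@part1 R N dx s lim Hl) | exact: (@part2 R N dx s lim Hl)].
Qed.
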